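(* Let $T$ be a perfect tree, $\rho$ a weight on $T$ and $T_0$ a finite subtree of $T$. Let $k\in\omega$ and let $D\subseteq T^k$ be dense open. Then there is a finite subtree $T_1$ of $T$ with $T_0\lhd_\rho T_1$ such that for every $k$-element set $\{\sigma_0,\dots,\sigma_{k-1}\}\subseteq\mathrm{term}(T_0)$ and all $\sigma_0',\dots,\sigma_{k-1}'\in\mathrm{term}(T_1)$ with $\sigma_l\subseteq\sigma_l'$ for all $l<k$, we have $(\sigma_0',\dots,\sigma_{k-1}')\in D$.
   Context: Trees are subsets of $A^{<\omega}$ ($A$ countable) closed under initial segments; perfect means every node has two incomparable extensions; $T_s=\{t\in T:t\subseteq s\text{ or }s\subseteq t\}$. $T$ is viewed as a poset where longer nodes are stronger (extension), $T^k$ carries the product order, and $D\subseteq T^k$ is dense open in this poset. A weight on $T$ is a map $\rho:T\times T\to[T]^{<\omega}$ with $\rho(s,t)\subseteq T_s\setminus T_t$. For a finite tree $R$, $\mathrm{term}(R)$ is its set of terminal nodes. For finite trees, $T_0\sqsubset T_1$ means $T_0\subsetneq T_1$ and every $t\in T_1\setminus T_0$ extends some element of $\mathrm{term}(T_0)$. For finite subtrees $T_0,T_1$ of $T$, $T_0\lhd_\rho T_1$ (also written $T_1\rhd_\rho T_0$) means $T_0\sqsubset T_1$ and for every $\sigma\in\mathrm{term}(T_0)$ there are $N\ge 2$ and an injective sequence $\langle s_i:i<N\rangle$ in $(T_1)_\sigma$ with $s_0=\sigma$, $s_{N-1}\in\mathrm{term}(T_1)$ and $\rho(s_i,s_{i+1})\subseteq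 T_1$ for all $i<N-1$. *)

(* Defs.v *)
From HB Require Import structures.
From mathcomp Require Import all_boot.
From mathcomp Require Import finmap.
Set Implicit Arguments. Unset Strict Implicit. Unset Printing Implicit Defensive.
Local Open Scope fset_scope.

(* Nodes are finite sequences over a countable alphabet A; s ⊆ t (initial
   segment) is [prefix s t].  Trees are Prop-valued predicates on nodes;
   finite (sub)trees are finite sets {fset seq A}. *)
Section TreeDefs.
Variable A : countType.
Notation node := (seq A).

Definition is_tree (T : node -> Prop) : Prop :=
  T [::] /\ forall s t : node, prefix s t -> T t -> T s.

Definition incomparable (s t : node) : Prop := ~~ prefix s t /\ ~~ prefix t s.

Definition perfect (T : node -> Prop) : Prop :=
  forall s, T s -> exists t u, [/\ T t, T u, prefix s t, prefix s u & incomparable t u].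

Definition Tcone (T : node -> Prop) (s : node) : node -> Prop :=
  fun t => T t /\ (prefix t s \/ prefix s t).

Definition is_weight (T : node -> Prop) (rho : node -> node -> {fset node}) : Prop :=
  forall s t, T s -> T t ->
    forall u, u \in rho s t -> Tcone T s u /\ ~ Tcone T t u.

Definition finite_subtree (T : node -> Prop) (R : {fset node}) : Prop :=
  is_tree (fun t => t \in R) /\ forall t, t \in R -> T t.

Definition term (R : {fset node}) (t : node) : Prop :=
  t \in R /\ forall u, u \in R -> prefix t u -> u = t.

Definition sqsub (R0 R1 : {fset node}) : Prop :=
  R0 `<` R1 /\ forall t, t \in R1 -> t \notin R0 -> exists2 s, term R0 s & prefix s t.

(* T0 ◁_rho T1 : the sequence <s_i : i < N> is given as a list ss of length N *)
Definition lhd (rho : node -> node -> {fset node}) (R0 R1 : {fset node}) : Prop :=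
  sqsub R0 R1 /\
  forall sigma, term R0 sigma ->
    exists ss : seq node,
      [/\ 2 <= size ss /\ uniq ss,
          (forall u, u \in ss -> Tcone (fun t => t \in R1) sigma u),
          nth [::] ss 0 = sigma,
          term R1 (nth [::] ss (size ss).-1) &
          forall i, i < (size ss).-1 -> rho (nth [::] ss i) (nth [::] ss i.+1) `<=` R1].

(* D ⊆ T^k is dense open in T^k, ordered by coordinatewise extension
   (longer = stronger) *)
Definition dense_open (T : node -> Prop) (k : nat) (D : ('I_k -> node) -> Prop) : Prop :=
  [/\ (forall q, D q -> forall l, T (q l)),
      (forall p : 'I_k -> node, (forall l, T (p l)) ->
         exists q, D q /\ forall l, prefix (p l) (q l)) &
      (forall q q' : 'I_k -> node, D q -> (forall l, T (q' l)) ->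
         (forall l, prefix (q l) (q' l)) -> D q')].
End TreeDefs.

(* Main.v *)
Require Import Defs.
From HB Require Import structures.
From mathcomp Require Import all_boot.
From mathcomp Require Import finmap.
From Stdlib Require Import Classical IndefiniteDescription.
Set Implicit Arguments. Unset Strict Implicit. Unset Printing Implicit Defensive.
Local Open Scope fset_scope.

Lemma fchoice (X Y : Type) (P : X -> Y -> Prop) :
  (forall x, exists y, P x y) -> exists f : X -> Y, forall x, P x (f x).
Proof.
move=> H; exists (fun x => proj1_sig (constructive_indefinite_description _ (H x))).
by move=> x; case: (constructive_indefinite_description _ (H x)).
Qed.

Lemma pigeon (k : nat) (good : 'I_k -> nat -> Prop) :
  (forall l s1 s2, s1 < k.+1 -> s2 < k.+1 -> ~ good l s1 -> ~ good l s2 -> s1 = s2) ->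
  exists s, s < k.+1 /\ forall l, good l s.
Proof.
move=> H; apply: NNPP => Hn.
have H2 : forall i : 'I_k.+1, exists l, ~ good l i.
  move=> i; apply: NNPP => Hi; apply: Hn; exists i; split; first exact: ltn_ord.
  by move=> l; apply: NNPP => Hl; apply: Hi; exists l.
have [f Hf] := fchoice H2.
have finj : injective f.
  move=> i j Hij; apply: val_inj; apply: (H (f i)); [exact: ltn_ord|exact: ltn_ord|exact: Hf|].
  by rewrite Hij; apply: Hf.
by have := leq_card _ finj; rewrite !card_ord ltnn.
Qed.

Section Pre.
Variable A : countType.
Notation node := (seq A).

Lemma pre_comp (a b x : node) : prefix a x -> prefix b x -> prefix a b \/ prefix b a.
Proof.
move=> Ha Hb; rewrite prefixE in Ha; rewrite prefixE in Hb.
move/eqP: Ha => Ha; move/eqP: Hb => Hb.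
case: (leqP (size a) (size b)) => H.
  by left; rewrite prefixE -{2}Ha -Hb take_takel.
by right; rewrite prefixE -Ha -{2}Hb take_takel // ltnW.
Qed.

Lemma pre_anti (a b : node) : prefix a b -> prefix b a -> a = b.
Proof.
move=> Hab Hba; have Hs : size a = size b by apply/eqP; rewrite eqn_leq !size_prefix.
by move: Hab; rewrite prefixE Hs take_size => /eqP.
Qed.

Lemma pre_size_lt (a b : node) : prefix a b -> a <> b -> size a < size b.
Proof.
move=> Hab Hne; rewrite ltn_neqAle size_prefix // andbT.
apply/negP => /eqP Hs; apply: Hne; move: Hab; rewrite prefixE Hs take_size => /eqP //.
Qed.

Definition termb (R : {fset node}) (x : node) :=
  (x \in R) && all (fun u => prefix x u ==> (u == x)) R.

Lemma termP (R : {fset node}) (x : node) : reflect (term R x) (termb R x).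
Proof.
apply: (iffP andP) => [[Hx /allP Ha]|[Hx Ha]]; split => //.
  by move=> u Hu Hp; apply/eqP; move: (Ha u Hu); rewrite Hp.
by apply/allP => u Hu; apply/implyP => Hp; apply/eqP; apply: Ha.
Qed.

Lemma term_comp (R : {fset node}) (a b : node) : term R a -> term R b -> prefix a b \/ prefix b a -> a = b.
Proof.
move=> [Ha Ta] [Hb Tb] [H|H]; first by rewrite (Ta b Hb H).
by rewrite (Tb a Ha H).
Qed.

Lemma tree_down (P : node -> Prop) a b : is_tree P -> prefix a b -> P b -> P a.
Proof. by move=> [_ H]; apply: H. Qed.

Lemma closure (R : {fset node}) (N : seq node) :
  exists R' : {fset node}, forall y, y \in R' <-> (y \in R \/ exists2 x, x \in N & prefix y x).
Proof.
exists (R `|` seq_fset tt (flatten [seq [seq take i x | i <- iota 0 (size x).+1] | x <- N])).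
move=> y; rewrite in_fsetU seq_fsetE; split.
  case/orP => [->|/flattenP [s /mapP [x Hx ->] /mapP [i _ ->]]]; first by left.
  by right; exists x => //; apply: prefix_take.
case=> [->//|[x Hx Hp]]; apply/orP; right; apply/flattenP.
exists [seq take i x | i <- iota 0 (size x).+1]; first by apply/mapP; exists x.
apply/mapP; exists (size y); first by rewrite mem_iota /= add0n ltnS size_prefix.
by move: Hp; rewrite prefixE => /eqP.
Qed.

Lemma max_elem (s : seq node) : s <> [::] -> exists2 x, x \in s & forall y, y \in s -> size y <= size x.
Proof.
elim: s => // a s IH _; case: s IH => [|b s] IH.
  by exists a; rewrite ?mem_seq1 // => y; rewrite mem_seq1 => /eqP ->.
have [x Hx Hm] := IH (fun H => ltac:(discriminate)).
case: (leqP (size a) (size x)) => H.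
  exists x; first by rewrite in_cons Hx orbT.
  by move=> y; rewrite in_cons => /orP [/eqP ->|]; [|apply: Hm].
exists a; first by rewrite mem_head.
move=> y; rewrite in_cons => /orP [/eqP ->//|/Hm Hy]; exact: (leq_trans Hy (ltnW H)).
Qed.

End Pre.

Section Sat.
Variable A : countType.
Notation node := (seq A).
Variable T : node -> Prop.
Variable k : nat.
Variable D : ('I_k -> node) -> Prop.
Hypothesis HD : dense_open T D.

Lemma D_open (q q' : 'I_k -> node) : D q -> (forall l, T (q' l)) ->
  (forall l, prefix (q l) (q' l)) -> D q'.
Proof. by case: HD => _ _ H; apply: H. Qed.

Lemma D_T (q : 'I_k -> node) l : D q -> T (q l).
Proof. by case: HD => H _ _ Hq; apply: H. Qed.

Lemma saturate (L : seq node) : (forall y, y \in L -> T y) ->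
  exists G : node -> node, [/\ forall y, prefix y (G y), forall y, y \in L -> T (G y) &
    forall q : 'I_k -> node, injective q -> (forall l, q l \in L) -> D (fun l => G (q l))].
Proof.
move=> HL.
pose m := size L.
suff: forall gs : seq {ffun 'I_k -> 'I_m}, exists G : node -> node,
   [/\ forall y, prefix y (G y), forall y, y \in L -> T (G y) &
    forall g, g \in gs -> injective (fun l => nth [::] L (g l)) ->
      D (fun l => G (nth [::] L (g l)))].
  move=> /(_ (enum {ffun 'I_k -> 'I_m})) [G [H1 H2 H3]].
  exists G; split => // q qinj Hq.
  have Hi l : index (q l) L < m by rewrite index_mem.
  pose g := [ffun l => Ordinal (Hi l)].
  have Hg l : nth [::] L (g l) = q l by rewrite ffunE /= nth_index.
  have := H3 g; rewrite mem_enum => /(_ isT) H4.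
  have H5 : injective (fun l => nth [::] L (g l)).
    by move=> l1 l2; rewrite !Hg; apply: qinj.
  apply: (D_open (H4 H5)) => l; first by apply: H2.
  by rewrite Hg prefix_refl.
elim => [|g gs [G [H1 H2 H3]]].
  by exists id; split => // y; rewrite prefix_refl.
case: (classic (injective (fun l => nth [::] L (g l)))) => Hinj; last first.
  exists G; split => // g0; rewrite in_cons => /orP [/eqP -> //|]; exact: H3.
have Hn l : nth [::] L (g l) \in L by rewrite mem_nth.
pose p := fun l => G (nth [::] L (g l)).
have [q [Dq Hpq]] : exists q, D q /\ forall l, prefix (p l) (q l).
  by case: HD => _ Hd _; apply: Hd => l; apply: H2.
pose G' := fun y => if [pick l | nth [::] L (g l) == y] is Some l then q l else G y.
have HG' y : prefix (G y) (G' y).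
  rewrite /G'; case: pickP => [l /eqP <-|_]; [exact: Hpq|exact: prefix_refl].
have HG'g l : G' (nth [::] L (g l)) = q l.
  rewrite /G'; case: pickP => [l' /eqP H|/(_ l)]; last by rewrite eqxx.
  by rewrite (Hinj _ _ H).
have HT' y : y \in L -> T (G' y).
  move=> Hy; rewrite /G'; case: pickP => [l _|_]; [exact: D_T|exact: H2].
exists G'; split.
- by move=> y; apply: prefix_trans (HG' y).
- exact: HT'.
move=> g0; rewrite in_cons => /orP [/eqP ->|Hg0] Hi0.
  apply: (D_open Dq) => l; first by apply: HT'.
  by rewrite HG'g prefix_refl.
apply: (D_open (H3 _ Hg0 Hi0)) => l; last exact: HG'.
by apply: HT'; rewrite mem_nth.
Qed.

End Sat.

Section Main.
Variable A : countType.
Notation node := (seq A).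
Variable T : node -> Prop.
Variable rho : node -> node -> {fset node}.
Variable T0 : {fset node}.
Variable k : nat.
Variable D : ('I_k -> node) -> Prop.
Hypothesis HT : is_tree T.
Hypothesis Hw : is_weight T rho.
Hypothesis HT0 : finite_subtree T T0.
Hypothesis HD : dense_open T D.
Variable E : node -> node.
Hypothesis HE : forall s, T s -> [/\ T (E s), prefix s (E s) & E s <> s].
Variable S : seq node.
Hypothesis HS : forall x, x \in S <-> term T0 x.

Definition good (W : nat -> seq node) j x := exists2 w, w \in W j & prefix w x.

Record Inv (r : nat) (R : {fset node}) (hist : nat -> node -> node) (W : nat -> seq node) : Prop := {
 i_tree : is_tree (fun x => x \in R);
 i_T : forall x, x \in R -> T x;
 i_T0 : T0 `<=` R;
 i_anch : forall x, x \in R -> x \in T0 \/ exists2 s, s \in S & prefix s x;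
 i_h0 : forall s, s \in S -> hist 0 s = s;
 i_hR : forall s i, s \in S -> i <= r -> hist i s \in R;
 i_hpre : forall s i, s \in S -> i <= r -> prefix s (hist i s);
 i_hstep : forall s i, s \in S -> i < r -> [/\ prefix (hist i s) (hist i.+1 s),
             hist i s <> hist i.+1 s & rho (hist i s) (hist i.+1 s) `<=` R];
 i_hterm : forall s, s \in S -> term R (hist r s);
 i_hgood : forall s j, s \in S -> j < r -> good W j (hist r s);
 i_bad : forall z, term R z -> forall s1 s2, s1 < r -> s2 < r ->
             ~ good W s1 z -> ~ good W s2 z -> s1 = s2;
 i_Wanch : forall j w, j < r -> w \in W j -> exists2 s, s \in S & prefix s w;
 i_WD : forall j q, j < r -> injective q -> (forall l, q l \in W j) -> D q }.

Lemma T0tree : is_tree (fun x => x \in T0).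
Proof. by case: HT0. Qed.

Lemma S_T0 s : s \in S -> s \in T0.
Proof. by move/HS => []. Qed.

Lemma S_eq s1 s2 x : s1 \in S -> s2 \in S -> prefix s1 x -> prefix s2 x -> s1 = s2.
Proof.
move=> H1 H2 P1 P2; apply: (@term_comp _ T0); [exact/HS|exact/HS|exact: pre_comp P1 P2].
Qed.

Lemma down_anch x y : (exists2 s, s \in S & prefix s x) -> prefix y x ->
  y \in T0 \/ exists2 s, s \in S & prefix s y.
Proof.
move=> [s Hs Hsx] Hyx; case: (pre_comp Hyx Hsx) => H.
  by left; apply: (tree_down T0tree H); apply: S_T0.
by right; exists s.
Qed.

Lemma term_sub (R : {fset node}) z : T0 `<=` R -> term R z -> z \in T0 -> z \in S.
Proof.
move=> /fsubsetP Hs [Hz Ht] H0; apply/HS; split => // u Hu Hp; apply: Ht => //; exact: Hs.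
Qed.

Lemma Tcone_T s u : Tcone T s u -> T u.
Proof. by case. Qed.

Lemma init : Inv 0 T0 (fun _ s => s) (fun _ => [::]).
Proof.
split => //.
- exact: T0tree.
- by case: HT0.
- by move=> x; left.
- by move=> s i Hs _; apply: S_T0.
- by move=> s i _ _; apply: prefix_refl.
- by move=> s Hs; apply/HS.
Qed.


Lemma round r R hist W : Inv r R hist W ->
  exists R' hist' W', Inv r.+1 R' hist' W'.
Proof.
move=> I.
pose L := [seq x <- enum_fset R | termb R x].
have HL x : x \in L <-> term R x.
  rewrite mem_filter; split; first by case/andP => /termP.
  by move=> /[dup] [[Hx _]] /termP ->.
have LT y : y \in L -> T y by move=> /HL [Hy _]; apply: (i_T I).
have [G [HG1 HG2 HG3]] := saturate HD LT.
pose h s := hist r s.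
pose n s := E (G (h s)).
have hterm s : s \in S -> term R (h s) by move=> Hs; apply: (i_hterm I).
have hL s : s \in S -> h s \in L by move=> Hs; apply/HL; apply: hterm.
have hR s : s \in S -> h s \in R by move=> Hs; case: (hterm s Hs).
have hT s : s \in S -> T (h s) by move=> Hs; apply: (i_T I); apply: hR.
have hpre s : s \in S -> prefix s (h s) by move=> Hs; apply: (i_hpre I).
have nprops s : s \in S -> [/\ T (n s), prefix (G (h s)) (n s) & n s <> G (h s)].
  by move=> Hs; apply: HE; apply: HG2; apply: hL.
have nT s : s \in S -> T (n s) by move=> /nprops [].
have Gn s : s \in S -> prefix (G (h s)) (n s) by move=> /nprops [].
have hn s : s \in S -> prefix (h s) (n s).
  by move=> Hs; apply: prefix_trans (HG1 _) (Gn s Hs).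
have hne s : s \in S -> h s <> n s.
  move=> Hs Heq; case: (nprops s Hs) => _ H1 H2; apply: H2.
  by apply: pre_anti => //; rewrite -Heq; apply: HG1.
have snp s : s \in S -> prefix s (n s) by move=> Hs; apply: prefix_trans (hpre s Hs) (hn s Hs).
have rhoP s u : s \in S -> u \in rho (h s) (n s) -> Tcone T (h s) u /\ ~ Tcone T (n s) u.
  by move=> Hs Hu; apply: Hw => //; [apply: hT|apply: nT].
pose N := [seq G x | x <- L] ++ flatten [seq n s :: enum_fset (rho (h s) (n s)) | s <- S].
have memN x : x \in N -> (exists2 z, term R z & x = G z) \/
    exists2 s, s \in S & (x = n s \/ x \in rho (h s) (n s)).
  rewrite mem_cat => /orP [/mapP [z /HL Hz ->]|/flattenP [l /mapP [s Hs ->]]].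
    by left; exists z.
  rewrite in_cons => /orP [/eqP ->|Hx]; right; exists s => //; [by left|by right].
have Nn s : s \in S -> n s \in N.
  move=> Hs; rewrite mem_cat; apply/orP; right; apply/flattenP.
  by exists (n s :: enum_fset (rho (h s) (n s))); [apply/mapP; exists s|rewrite mem_head].
have Nrho s u : s \in S -> u \in rho (h s) (n s) -> u \in N.
  move=> Hs Hu; rewrite mem_cat; apply/orP; right; apply/flattenP.
  exists (n s :: enum_fset (rho (h s) (n s))); first by apply/mapP; exists s.
  by rewrite in_cons Hu orbT.
have NG z : z \in L -> G z \in N.
  by move=> Hz; rewrite mem_cat; apply/orP; left; apply/mapP; exists z.
have [R' HR'] := closure R N.
have RR' x : x \in R -> x \in R' by move=> Hx; apply/HR'; left.
have NR' x : x \in N -> x \in R' by move=> Hx; apply/HR'; right; exists x => //; apply: prefix_refl.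
pose hist' := fun i s => if i <= r then hist i s else n s.
pose W' := fun j => if j == r then [seq G x | x <- L] else W j.
have goodE j x : j != r -> good W' j x <-> good W j x.
  by move=> Hj; rewrite /good /W' (negbTE Hj).
have goodr x : good W' r x <-> exists2 z, z \in L & prefix (G z) x.
  rewrite /good /W' eqxx; split.
    by case=> w /mapP [z Hz ->] Hp; exists z.
  by case=> z Hz Hp; exists (G z) => //; apply/mapP; exists z.
have R'tree : is_tree (fun x => x \in R').
  split; first by apply: RR'; case: (i_tree I).
  move=> a b Hab /HR' [Hb|[x Hx Hbx]]; apply/HR'.
    by left; apply: (tree_down (i_tree I) Hab Hb).
  by right; exists x => //; apply: prefix_trans Hab Hbx.
have NT x : x \in N -> T x.
  case/memN => [[z Hz ->]|[s Hs [->|Hx]]].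
  - by apply: HG2; apply/HL.
  - exact: nT.
  - by case: (rhoP _ _ Hs Hx) => /Tcone_T.
have nterm s : s \in S -> term R' (n s).
  move=> Hs; split; first by apply: NR'; apply: Nn.
  move=> u /HR' [Hu|[x Hx Hux]] Hnu.
    have Hhu : prefix (h s) u by apply: prefix_trans (hn s Hs) Hnu.
    case: (hterm s Hs) => _ Ht; have Hu' := Ht u Hu Hhu.
    by exfalso; apply: (hne s Hs); apply: pre_anti; [apply: hn|rewrite -Hu'].
  have Hnx : prefix (n s) x by apply: prefix_trans Hnu Hux.
  case/memN: Hx => [[z Hz Hxz]|[s' Hs' [Hxn|Hxr]]].
  - exfalso; subst x.
    have Hhz : prefix (h s) (G z) by apply: prefix_trans (hn s Hs) Hnx.
    have Ez : z = h s by apply: (term_comp Hz (hterm s Hs)); apply: pre_comp (HG1 z) Hhz.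
    subst z; case: (nprops s Hs) => _ H1 H2; apply: H2; exact: pre_anti.
  - subst x.
    have Es : s = s' by apply: (S_eq Hs Hs'); [apply: prefix_trans (snp s Hs) Hnx|apply: snp].
    subst s'; exact: pre_anti.
  - case: (rhoP _ _ Hs' Hxr) => [[Tx [Hxh|Hhx]] Hnc]; exfalso.
      have Es : s = s'.
        apply: (S_eq Hs Hs' _ (hpre s' Hs')).
        by apply: prefix_trans (snp s Hs) (prefix_trans Hnx Hxh).
      subst s'; apply: (hne s Hs); apply: pre_anti; first exact: hn.
      exact: prefix_trans Hnx Hxh.
    have Es : s = s'.
      apply: (S_eq Hs Hs' (prefix_trans (snp s Hs) Hnx)).
      exact: prefix_trans (hpre s' Hs') Hhx.
    by subst s'; apply: Hnc; split => //; right.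
have classify z : term R' z -> (exists2 y, term R y &
      (forall j, j < r -> good W j y -> good W j z) /\ good W' r z) \/
    (forall j, j < r -> good W j z).
  move=> Hz; case: (Hz) => Hz' Ht.
  have caseR : z \in R -> (exists2 y, term R y &
      (forall j, j < r -> good W j y -> good W j z) /\ good W' r z) \/
    (forall j, j < r -> good W j z).
    move=> HzR.
    have tz : term R z by split => // u Hu Hp; apply: Ht => //; apply: RR'.
    left; exists z => //; split => //.
    have HzL : z \in L by apply/HL.
    have EG : G z = z by apply: Ht; [apply: NR'; apply: NG|apply: HG1].
    by apply/goodr; exists z => //; rewrite EG prefix_refl.
  case/HR': Hz' => [HzR|[x Hx Hzx]]; first exact: caseR.
  case/memN: Hx => [[y Hy Hxy]|[s Hs [Hxn|Hxr]]].
  - subst x; case: (pre_comp Hzx (HG1 y)) => Hzy.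
      by apply: caseR; apply: (tree_down (i_tree I) Hzy); case: Hy.
    left; exists y => //; split.
      by move=> j _ [w Hw1 Hwy]; exists w => //; apply: prefix_trans Hwy Hzy.
    have EG : G y = z by apply: Ht => //; apply: NR'; apply: NG; apply/HL.
    by apply/goodr; exists y; [apply/HL|rewrite EG prefix_refl].
  - subst x; have Ez : n s = z by apply: Ht => //; apply: NR'; apply: Nn.
    right => j Hj; case: (i_hgood I Hs Hj) => w Hw1 Hwh; exists w => //.
    by rewrite -Ez; apply: prefix_trans Hwh (hn s Hs).
  - case: (rhoP _ _ Hs Hxr) => [[Tx [Hxh|Hhx]] _].
      by apply: caseR; apply: (tree_down (i_tree I) (prefix_trans Hzx Hxh)); apply: hR.
    case: (pre_comp Hzx Hhx) => Hzh.
      by apply: caseR; apply: (tree_down (i_tree I) Hzh); apply: hR.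
    right => j Hj; case: (i_hgood I Hs Hj) => w Hw1 Hwh; exists w => //.
    exact: prefix_trans Hwh Hzh.
exists R', hist', W'; split.
- exact: R'tree.
- move=> x /HR' [Hx|[y Hy Hxy]]; first exact: (i_T I).
  by case: HT => _ H; apply: (H x y Hxy); apply: NT.
- apply: fsubset_trans (i_T0 I) _; apply/fsubsetP => x; exact: RR'.
- move=> x /HR' [Hx|[y Hy Hxy]]; first exact: (i_anch I).
  suff [y' Hyy' Hy'] : exists2 y', prefix y y' & exists2 s, s \in S & prefix s y'.
    by apply: (down_anch Hy'); apply: prefix_trans Hxy Hyy'.
  case/memN: Hy => [[z Hz ->]|[s Hs [->|Hyr]]].
  + exists (G z); first exact: prefix_refl.
    case: (Hz) => HzR _; case: (i_anch I HzR) => [Hz0|[s Hs Hsz]].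
      by exists z; [apply: (term_sub (i_T0 I))|apply: HG1].
    by exists s => //; apply: prefix_trans Hsz (HG1 z).
  + by exists (n s); [apply: prefix_refl|exists s => //; apply: snp].
  + case: (rhoP _ _ Hs Hyr) => [[Ty [Hyh|Hhy]] _].
      by exists (h s) => //; exists s => //; apply: hpre.
    exists y; first exact: prefix_refl.
    by exists s => //; apply: prefix_trans (hpre s Hs) Hhy.
- by move=> s Hs; rewrite /hist' leq0n; apply: (i_h0 I).
- move=> s i Hs Hi; rewrite /hist'; case: ifP => Hir.
    by apply: RR'; apply: (i_hR I).
  by apply: NR'; apply: Nn.
- move=> s i Hs Hi; rewrite /hist'; case: ifP => Hir.
    exact: (i_hpre I).
  exact: snp.
- move=> s i Hs Hi; rewrite /hist'.
  case: (ltnP i r) => Hir.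
    rewrite (ltnW Hir); case: (i_hstep I Hs Hir) => H1 H2 H3; split => //.
    by apply: fsubset_trans H3 _; apply/fsubsetP => x; exact: RR'.
  have Ei : i = r by apply/eqP; rewrite eqn_leq Hir andbT -ltnS.
  subst i; rewrite ?leqnn ?ltnn; split.
  + exact: hn.
  + exact: hne.
  + by apply/fsubsetP => u Hu; apply: NR'; apply: Nrho Hu.
- by move=> s Hs; rewrite /hist' ltnn; apply: nterm.
- move=> s j Hs Hj; rewrite /hist' ltnn.
  case: (ltnP j r) => Hjr.
    have Hne : j != r by rewrite ltn_neqAle in Hjr; case/andP: Hjr.
    apply/(goodE _ _ Hne); case: (i_hgood I Hs Hjr) => w Hw1 Hwh; exists w => //.
    exact: prefix_trans Hwh (hn s Hs).
  have Ej : j = r by apply/eqP; rewrite eqn_leq Hjr andbT -ltnS.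
  subst j; apply/goodr; exists (h s); [exact: hL|exact: Gn].
- move=> z Hz s1 s2 H1 H2 B1 B2.
  have Hlt j : j < r.+1 -> ~ good W' j z -> j != r -> j < r.
    by move=> Hj _ Hne; rewrite ltn_neqAle Hne -ltnS.
  case: (classify z Hz) => [[y Hy [Hmono Hr]]|Hall].
    have N1 : s1 != r by apply/eqP => E1; subst s1.
    have N2 : s2 != r by apply/eqP => E2; subst s2.
    have L1 := Hlt _ H1 B1 N1; have L2 := Hlt _ H2 B2 N2.
    apply: (i_bad I Hy L1 L2).
      by move=> Hg; apply: (B1); apply: (proj2 (goodE _ _ N1)); apply: Hmono.
    by move=> Hg; apply: (B2); apply: (proj2 (goodE _ _ N2)); apply: Hmono.
  have E1 : s1 = r.
    case: (eqVneq s1 r) => // N1; exfalso; apply: (B1); apply: (proj2 (goodE _ _ N1)); apply: Hall.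
    exact: Hlt _ H1 B1 N1.
  have E2 : s2 = r.
    case: (eqVneq s2 r) => // N2; exfalso; apply: (B2); apply: (proj2 (goodE _ _ N2)); apply: Hall.
    exact: Hlt _ H2 B2 N2.
  by rewrite E1 E2.
- move=> j w Hj; rewrite /W'; case: eqP => [_|Hne].
    case/mapP => z /HL Hz ->; case: (Hz) => HzR _.
    case: (i_anch I HzR) => [Hz0|[s Hs Hsz]].
      by exists z; [apply: (term_sub (i_T0 I))|apply: HG1].
    by exists s => //; apply: prefix_trans Hsz (HG1 z).
  move=> Hw'; apply: (i_Wanch I _ Hw'); rewrite ltn_neqAle -ltnS Hj andbT; exact/eqP.
- move=> j q Hj qinj; rewrite /W'; case: eqP => [_|Hne] Hq; last first.
    apply: (i_WD I _ qinj Hq); rewrite ltn_neqAle -ltnS Hj andbT; exact/eqP.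
  have Hz : forall l, exists z, z \in L /\ q l = G z.
    by move=> l; case/mapP: (Hq l) => z Hz ->; exists z.
  have [z Hzl] := fchoice Hz.
  have zinj : injective z.
    by move=> l1 l2 Hz12; apply: qinj; rewrite (proj2 (Hzl l1)) (proj2 (Hzl l2)) Hz12.
  apply: (D_open HD (HG3 z zinj (fun l => proj1 (Hzl l)))) => l.
    by rewrite (proj2 (Hzl l)); apply: HG2; apply: (proj1 (Hzl l)).
  by rewrite (proj2 (Hzl l)) prefix_refl.
Qed.

Lemma iter r : exists R hist W, Inv r R hist W.
Proof.
elim: r => [|r [R [hist [W I]]]]; first by exists T0, (fun _ s => s), (fun _ => [::]); apply: init.
exact: round I.
Qed.

Lemma hsize r R hist W s : Inv r R hist W -> s \in S ->
  forall i j, i < j -> j <= r -> size (hist i s) < size (hist j s).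
Proof.
move=> I Hs i; elim => // j IH Hij Hjr.
have Hj : j < r by [].
case: (i_hstep I Hs Hj) => H1 H2 _.
have Hlt := pre_size_lt H1 H2.
rewrite ltnS leq_eqVlt in Hij; case/orP: Hij => [/eqP ->//|Hij].
exact: ltn_trans (IH Hij (ltnW Hjr)) Hlt.
Qed.

Lemma final : exists T1 : {fset node},
    [/\ finite_subtree T T1, lhd rho T0 T1 &
        forall sigma sigma' : 'I_k -> node,
          injective sigma ->
          (forall l, term T0 (sigma l)) ->
          (forall l, term T1 (sigma' l)) ->
          (forall l, prefix (sigma l) (sigma' l)) ->
          D sigma'].
Proof.
have [T1 [hist [W I]]] := iter k.+1.
have [s0 Hs0] : exists s0, s0 \in S.
  have [x Hx Hm] : exists2 x, x \in enum_fset T0 & forall y, y \in enum_fset T0 -> size y <= size x.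
    apply: max_elem => Hnil.
    have : [::] \in T0 by case: T0tree.
    by rewrite -[_ \in T0]/([::] \in enum_fset T0) Hnil.
  exists x; apply/HS; split => // u Hu Hxu.
  have Hs : size u <= size x by apply: Hm.
  by move: Hxu; rewrite prefixE => /eqP <-; rewrite take_oversize.
exists T1; split.
- by split; [exact: (i_tree I)|exact: (i_T I)].
- split.
    split.
      rewrite fproperEneq (i_T0 I) andbT; apply/eqP => Heq.
      have H1 : hist 1 s0 \in T1 by apply: (i_hR I).
      case: (i_hstep I Hs0 (ltn0Sn k)) => Hp Hne _.
      rewrite (i_h0 I Hs0) in Hp Hne.
      have [_ Ht] : term T0 s0 by apply/HS.
      by apply: Hne; symmetry; apply: Ht => //; rewrite Heq.
    move=> t Ht Hnt; case: (i_anch I Ht) => [H|[s Hs Hst]]; first by rewrite H in Hnt.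
    by exists s => //; apply/HS.
  move=> sg /HS Hs.
  have Hinj : {in iota 0 k.+2 &, injective (fun i => hist i sg)}.
    move=> i j; rewrite !mem_iota !add0n /= => Hi Hj Heq.
    case: (ltngtP i j) => // Hij; exfalso.
      by have := hsize I Hs Hij Hj; rewrite Heq ltnn.
    by have := hsize I Hs Hij Hi; rewrite Heq ltnn.
  exists (mkseq (fun i => hist i sg) k.+2); split.
  + by rewrite size_mkseq /mkseq (map_inj_in_uniq Hinj) iota_uniq.
  + move=> u /mapP [i]; rewrite mem_iota add0n /= => Hi ->.
    by split; [apply: (i_hR I)|right; apply: (i_hpre I)].
  + by rewrite nth_mkseq // (i_h0 I Hs).
  + by rewrite size_mkseq nth_mkseq //; apply: (i_hterm I).
  + move=> i Hi0; rewrite size_mkseq in Hi0.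
    have Hi : i < k.+1 := Hi0.
    have Hi1 : i < k.+2 := ltnW Hi.
    rewrite !nth_mkseq //.
    by case: (i_hstep I Hs Hi).
move=> sig sig' siginj Hsig Hsig' Hpre.
have Hbad l s1 s2 : s1 < k.+1 -> s2 < k.+1 -> ~ good W s1 (sig' l) -> ~ good W s2 (sig' l) -> s1 = s2.
  exact: (i_bad I (Hsig' l)).
have [j [Hj Hall]] := @pigeon k (fun l j => good W j (sig' l)) Hbad.
have Hwx : forall l, exists w, w \in W j /\ prefix w (sig' l).
  by move=> l; case: (Hall l) => w Hw1 Hw2; exists w.
have [w Hwl] := fchoice Hwx.
have winj : injective w.
  move=> l1 l2 Heq.
  case: (i_Wanch I Hj (proj1 (Hwl l1))) => s Hs Hsw.
  have Hs1 : s = sig l1.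
    apply: (S_eq Hs _ (prefix_trans Hsw (proj2 (Hwl l1))) (Hpre l1)); exact/HS.
  have Hs2 : s = sig l2.
    apply: (S_eq Hs _ _ (Hpre l2)); first exact/HS.
    by rewrite Heq in Hsw; apply: prefix_trans Hsw (proj2 (Hwl l2)).
  by apply: siginj; rewrite -Hs1 -Hs2.
apply: (D_open HD (i_WD I Hj winj (fun l => proj1 (Hwl l)))) => l.
  by apply: (i_T I); case: (Hsig' l).
exact: (proj2 (Hwl l)).
Qed.
End Main.

Theorem lemma4p15 (A : countType) (T : seq A -> Prop)
  (rho : seq A -> seq A -> {fset seq A}) (T0 : {fset seq A})
  (k : nat) (D : ('I_k -> seq A) -> Prop) :
  is_tree T -> perfect T -> is_weight T rho -> finite_subtree T T0 ->
  dense_open T D ->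
  exists T1 : {fset seq A},
    [/\ finite_subtree T T1, lhd rho T0 T1 &
        forall sigma sigma' : 'I_k -> seq A,
          injective sigma ->
          (forall l, term T0 (sigma l)) ->
          (forall l, term T1 (sigma' l)) ->
          (forall l, prefix (sigma l) (sigma' l)) ->
          D sigma'].
Proof.
move=> HT Hper Hw HT0 HD.
have HE0 : forall s : seq A, exists t, T s -> [/\ T t, prefix s t & t <> s].
  move=> s; case: (classic (T s)) => Hs; last by exists s.
  have [t [u [Tt Tu Hst Hsu [Hi1 Hi2]]]] := Hper s Hs.
  exists t => _; split => // Ets; subst t.
  by move/negP: Hi1; apply.
have [E HE] := fchoice HE0.
pose S := [seq x <- enum_fset T0 | termb T0 x].
have HS : forall x, x \in S <-> term T0 x.
  move=> x; rewrite mem_filter; split; first by case/andP => /termP.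
  by move=> /[dup] [[Hx _]] /termP ->.
exact: (final HT Hw HT0 HD HE HS).
Qed.
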